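(* Let $(X,\|\cdot\|_X)$ be a Banach space and $\mathcal{K}\subset X$ a bounded set. For every $n\ge1$, every $\gamma>0$ and every norm $\|\cdot\|_{Y_n}$ on $\mathbb{R}^n$, $$\mathrm{rad}(\mathcal{K})-\gamma\le d^\gamma(\mathcal{K},Y_n)_X\le\mathrm{rad}(\mathcal{K}).$$
   Context: $\mathrm{rad}(\mathcal{K})=\inf_{g\in X}\sup_{f\in\mathcal{K}}\|f-g\|_X$. For a norm $\|\cdot\|_{Y_n}$ on $\mathbb{R}^n$ let $B_{Y_n}=\{y\in\mathbb{R}^n:\|y\|_{Y_n}\le1\}$. The fixed Lipschitz width is $d^\gamma(\mathcal{K},Y_n)_X=\inf_{\Phi}\sup_{f\in\mathcal{K}}\inf_{y\in B_{Y_n}}\|f-\Phi(y)\|_X$, the infimum being over all maps $\Phi:B_{Y_n}\to X$ with $\|\Phi(y)-\Phi(y')\|_X\le\gamma\|y-y'\|_{Y_n}$ for all $y,y'\in B_{Y_n}$. *)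

(* Defs.v *)
From HB Require Import structures.
From mathcomp Require Import all_boot all_order all_algebra.
From mathcomp Require Import all_classical all_reals all_analysis.
Set Implicit Arguments. Unset Strict Implicit. Unset Printing Implicit Defensive.
Import Order.TTheory GRing.Theory Num.Theory.
Import numFieldNormedType.Exports.
Local Open Scope classical_set_scope.
Local Open Scope ring_scope.

Definition is_norm (R : realType) (n : nat) (N : 'rV[R]_n -> R) : Prop :=
  [/\ forall y, 0 <= N y,
      forall y, N y = 0 -> y = 0,
      forall (a : R) y, N (a *: y) = `|a| * N y
    & forall y y', N (y + y') <= N y + N y'].

Definition unit_ball (R : realType) (n : nat) (N : 'rV[R]_n -> R) : set 'rV[R]_n :=
  [set y | N y <= 1].

Local Open Scope ereal_scope.

Definition cheb_rad (R : realType) (X : normedModType R) (K : set X) : \bar R :=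
  ereal_inf [set ereal_sup [set (`|f - g|)%:E | f in K] | g in [set: X]].

(* gamma-Lipschitz maps from the unit ball of N into X (values outside the
   ball are irrelevant). *)
Definition lip_on_ball (R : realType) (X : normedModType R) (n : nat)
    (N : 'rV[R]_n -> R) (gamma : R) (Phi : 'rV[R]_n -> X) : Prop :=
  forall y y', unit_ball N y -> unit_ball N y' ->
    (`|Phi y - Phi y'| <= gamma * N (y - y'))%R.

Definition fixed_lip_width (R : realType) (X : normedModType R) (K : set X)
    (n : nat) (N : 'rV[R]_n -> R) (gamma : R) : \bar R :=
  ereal_inf [set ereal_sup [set ereal_inf [set (`|f - Phi y|)%:E | y in unit_ball N]
                             | f in K]
            | Phi in lip_on_ball N gamma].

(* Main.v *)
Require Import Defs.
From HB Require Import structures.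
From mathcomp Require Import all_boot all_order all_algebra.
From mathcomp Require Import all_classical all_reals all_analysis.
Import Order.TTheory GRing.Theory Num.Theory.
Import numFieldNormedType.Exports.
Local Open Scope classical_set_scope.
Local Open Scope ring_scope.

Theorem lemma2p4 (R : realType) (X : completeNormedModType R) (K : set X)
  (hK : [bounded x | x in K]) (n : nat) (hn : (1 <= n)%N) (gamma : R)
  (hgamma : 0 < gamma) (N : 'rV[R]_n -> R) (hN : is_norm N) :
  (cheb_rad K - gamma%:E <= fixed_lip_width K N gamma)%E /\
  (fixed_lip_width K N gamma <= cheb_rad K)%E.
Proof.
case: hN => N0 _ Nhom _.
have N00 : N 0 = 0.
  by rewrite -(scale0r (0 : 'rV[R]_n)) Nhom normr0 mul0r.
have B0 : unit_ball N 0 by rewrite /unit_ball /= N00 ler01.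
split.
- apply: le_ereal_inf_tmp => _ [Phi Lip <-].
  rewrite leeBlDr //.
  apply: ge_ereal_inf.
  exists (ereal_sup [set (`|f - Phi 0|)%:E | f in K]).
    by exists (Phi 0).
  apply: ge_ereal_sup => _ [f Kf <-].
  rewrite -leeBlDr //.
  apply: (@le_trans _ _ (ereal_inf [set (`|f - Phi y|)%:E | y in unit_ball N])).
    apply: le_ereal_inf_tmp => _ [y By <-].
    rewrite lee_fin lerBlDr.
    have := Lip y 0 By B0; rewrite subr0 => hL.
    apply: (le_trans (y := `|f - Phi y| + `|Phi y - Phi 0|)).
      have -> : f - Phi 0 = (f - Phi y) + (Phi y - Phi 0) by rewrite addrA subrK.
      exact: ler_normD.
    rewrite lerD2l; apply: (le_trans hL).
    by rewrite -[leRHS]mulr1 ler_wpM2l // ltW.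
  by apply: ereal_sup_ubound; exists f.
- apply: le_ereal_inf_tmp => _ [g _ <-].
  apply: ge_ereal_inf; eexists; last exact: le_refl.
  exists (fun _ => g).
    by move=> y y' _ _; rewrite subrr normr0 mulr_ge0 // ltW.
  congr ereal_sup; apply: eq_set => z /=; apply: propext; split.
  + move=> [f Kf <-]; exists f => //.
    apply/eqP; rewrite eq_le; apply/andP; split.
      by apply: le_ereal_inf_tmp => _ [y _ <-].
    by apply: ereal_inf_lbound; exists 0.
  + move=> [f Kf <-]; exists f => //.
    apply/eqP; rewrite eq_le; apply/andP; split.
      by apply: ereal_inf_lbound; exists 0.
    by apply: le_ereal_inf_tmp => _ [y _ <-].
Qed.
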